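(* Let $L$ be an $r\times m$ integer matrix. There is $K_L>0$ depending only on $L$ such that for every positive integer $p$ there exist elements $j_1/p,\ldots,j_K/p\in J(L,p)$ with $K\le K_L$ such that \[J(L,p)=\bigsqcup_{k=1}^{K}\big(j_k/p+(\Lambda\cap\ker_{\mathbb{T}}L)\big)\] (a disjoint union, with addition in $\mathbb{T}^m$).
   Context: $\mathbb{T}=\mathbb{R}/\mathbb{Z}$, and $\mathbb{T}^m$ is identified with $[0,1)^m$ with coordinatewise addition mod 1. $\ker_{\mathbb{T}}L=\{x\in\mathbb{T}^m:Lx=0\}$ with normalized Haar probability measure $\mu_L$. For a positive integer $p$, $\Lambda=\Lambda(p)=\{j/p: j\in\mathbb{Z}_p^m\}\le\mathbb{T}^m$, where for $j=(j(1),\ldots,j(m))$ with $j(i)\in\{0,\ldots,p-1\}$ we write $j/p=(j(1)/p,\ldots,j(m)/p)$. Define $J(L,p)=\{j/p\in\Lambda:\ \mu_L\big((j/p+[0,1/p)^m)\cap\ker_{\mathbb{T}}L\big)>0\}$. *)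

(* Defs.v *)
From HB Require Import structures.
From mathcomp Require Import all_boot all_order all_algebra.
From mathcomp Require Import all_classical all_reals all_analysis.
Set Implicit Arguments. Unset Strict Implicit. Unset Printing Implicit Defensive.
Import Order.TTheory GRing.Theory Num.Theory.
Import numFieldNormedType.Exports.
Local Open Scope classical_set_scope.
Local Open Scope ring_scope.

(* Points of R^m are row vectors 'rV[R]_m; the torus T^m is identified with
   [0,1)^m, with coordinatewise addition mod 1. *)

Notation borelRm R m := (g_sigma_algebraType (@open 'rV[R]_m)).

Definition frac (R : realType) (x : R) : R := x - (Num.floor x)%:~R.

Definition torus (R : realType) (m : nat) : set 'rV[R]_m :=
  [set x | forall i, 0 <= x 0 i < 1].

Definition tadd (R : realType) (m : nat) (x y : 'rV[R]_m) : 'rV[R]_m :=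
  \row_i frac (x 0 i + y 0 i).

(* ker_T L = { x in T^m : L x = 0 in T^r }, i.e. every coordinate of L x is an integer *)
Definition kerT (R : realType) (r m : nat) (L : 'M[int]_(r, m)) : set 'rV[R]_m :=
  [set x | torus x /\ forall k : 'I_r, (\sum_(i < m) (L k i)%:~R * x 0 i) \is a Num.int].

Definition Lambda (R : realType) (m p : nat) : set 'rV[R]_m :=
  [set x | exists j : 'I_m -> 'I_p, x = \row_i ((j i)%:R / p%:R)].

Definition box (R : realType) (m p : nat) (x : 'rV[R]_m) : set 'rV[R]_m :=
  [set y | forall i, x 0 i <= y 0 i < x 0 i + p%:R^-1].

(* mu is (the extension by zero to [0,1)^m of) the normalized Haar probability
   measure of the compact group ker_T L: a Borel probability measure on R^m,
   concentrated on ker_T L, and invariant under translations (mod 1) by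
   elements of ker_T L.  Such a measure exists and is unique. *)
Definition is_Haar_kerT (R : realType) (r m : nat) (L : 'M[int]_(r, m))
    (mu : {measure set (borelRm R m) -> \bar R}) : Prop :=
  [/\ mu setT = 1%E,
      mu (~` (kerT L : set (borelRm R m))) = 0%E &
      forall (x : 'rV[R]_m) (A : set (borelRm R m)), kerT L x ->
        measurable A ->
        measurable ([set y | A (tadd y x)] : set (borelRm R m)) ->
        mu [set y | A (tadd y x)] = mu A].

Definition Jset (R : realType) (r m : nat) (L : 'M[int]_(r, m))
    (mu : {measure set (borelRm R m) -> \bar R}) (p : nat) : set 'rV[R]_m :=
  [set x | @Lambda R m p x /\
           (0 < mu ((box p x `&` kerT L) : set (borelRm R m)))%E].

(* Main.v *)
Require Import Defs.
From HB Require Import structures.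
From mathcomp Require Import all_boot all_order all_algebra.
From mathcomp Require Import all_classical all_reals all_analysis.
From mathcomp Require Import lra ring.
Set Implicit Arguments. Unset Strict Implicit. Unset Printing Implicit Defensive.
Import Order.TTheory GRing.Theory Num.Theory.
Import numFieldNormedType.Exports.
Local Open Scope classical_set_scope.
Local Open Scope ring_scope.

Lemma frac_eqz (R : realType) (z : int) (t : R) :
  z%:~R <= t < z%:~R + 1 -> Defs.frac t = t - z%:~R.
Proof.
move=> h; rewrite /Defs.frac; congr (_ - _); congr intr; apply: floor_def.
by rewrite intrD.
Qed.

Lemma frac_ge0 (R : realType) (t : R) : 0 <= Defs.frac t.
Proof. by rewrite /Defs.frac subr_ge0 floor_le. Qed.

Lemma frac_lt1 (R : realType) (t : R) : Defs.frac t < 1.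
Proof. rewrite /Defs.frac; have := lt_succ_floor t; rewrite intrD; lra. Qed.

Lemma int_sub (R : realType) (a b : R) : b \is a Num.int ->
  (a - b \is a Num.int) = (a \is a Num.int).
Proof. move=> hb; by rewrite rpredBr. Qed.

Lemma dz (a b c : int) : (c %| a)%Z -> (c %| b)%Z -> (c %| a - b)%Z.
Proof. move=> ha hb. by rewrite rpredB. Qed.

Lemma meas_open (R : realType) m (f : 'rV[R]_m -> R) (U : set R) :
  continuous f -> open U -> measurable (f @^-1` U : set (borelRm R m)).
Proof.
move=> cf oU; apply: sub_sigma_algebra; apply: open_comp => //.
Qed.

Lemma meas_closed (R : realType) m (f : 'rV[R]_m -> R) (U : set R) :
  continuous f -> closed U -> measurable (f @^-1` U : set (borelRm R m)).
Proof.
move=> cf cU.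
have -> : (f @^-1` U : set (borelRm R m)) = ~` (f @^-1` (~` U)).
  by rewrite preimage_setC setCK.
apply: measurableC.
by apply: meas_open => //; exact: closed_openC.
Qed.

Lemma meas_itv (R : realType) m (f : 'rV[R]_m -> R) (lo hi : R) :
  continuous f -> measurable ([set y | lo <= f y < hi] : set (borelRm R m)).
Proof.
move=> cf.
have -> : [set y | lo <= f y < hi] =
  (f @^-1` [set x | lo <= x]) `&` (f @^-1` [set x | x < hi]).
  by apply/seteqP; split => y /=; [move/andP|move=> [-> ->]].
apply: measurableI; first by apply: meas_closed => //; exact: closed_ge.
by apply: meas_open => //; exact: open_lt.
Qed.

Lemma meas_eq (R : realType) m (f : 'rV[R]_m -> R) (c : R) :
  continuous f -> measurable ([set y | f y = c] : set (borelRm R m)).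
Proof. move=> cf; have := @meas_closed R m f [set x | x = c] cf; apply; exact: closed_eq. Qed.

Lemma meas_int (R : realType) m (f : 'rV[R]_m -> R) :
  continuous f -> measurable ([set y | f y \is a Num.int] : set (borelRm R m)).
Proof.
move=> cf.
have -> : [set y | f y \is a Num.int] =
  \bigcup_n ([set y | f y = n%:R] `|` [set y | f y = - n%:R]) :> set (borelRm R m).
  apply/seteqP; split => y /=.
    move=> /intrP [z hz]; case: z hz => n hz.
      by exists n => //; left.
    by exists n.+1 => //; right; simpl; rewrite hz NegzE.
  move=> [n _ [->|->]]; first exact: natr_int.
  by rewrite rpredN natr_int.
by apply: bigcupT_measurable => n; apply: measurableU; exact: meas_eq.
Qed.

Lemma meas_frac (R : realType) m (f : 'rV[R]_m -> R) (lo hi : R) :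
  continuous f -> 0 <= lo -> hi <= 1 ->
  measurable ([set y | lo <= Defs.frac (f y) < hi] : set (borelRm R m)).
Proof.
move=> cf lo0 hi1.
have -> : [set y | lo <= Defs.frac (f y) < hi] =
  \bigcup_n ([set y | lo + n%:R <= f y < hi + n%:R] `|`
             [set y | lo - n%:R <= f y < hi - n%:R]) :> set (borelRm R m).
  apply/seteqP; split => y /=.
    rewrite /Defs.frac; case: (Num.floor (f y)) => n.
      by move=> /andP[h1 h2]; exists n => //; left; apply/andP; split; lra.
    rewrite NegzE => /andP[h1 h2]; exists n.+1 => //; right.
    move: h1 h2; rewrite mulrNz; set u := (_ *+ _); move=> h1 h2.
    apply/andP; split; lra.
  move=> [n _ [/andP[h1 h2]|/andP[h1 h2]]].
    rewrite (@frac_eqz _ n); first by apply/andP; split; lra.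
    by apply/andP; split; lra.
  rewrite (@frac_eqz _ (- n%:Z)); first by rewrite mulrNz; apply/andP; split; lra.
  by rewrite mulrNz; apply/andP; split; lra.
apply: bigcupT_measurable => n; apply: measurableU; exact: meas_itv.
Qed.

Lemma meas_forall (R : realType) m n (F : 'I_n -> set (borelRm R m)) :
  (forall i, measurable (F i)) -> measurable [set y | forall i, F i y].
Proof.
move=> mF.
have -> : [set y | forall i, F i y] =
  \bigcap_(k : nat) (if insub k is Some i then F i else setT).
  apply/seteqP; split => y /=.
    move=> h k _; case: insubP => // i _ _; exact: h.
  move=> h i; have := h (val i) I; by rewrite valK.
by apply: bigcapT_measurable => k; case: insubP => // i _ _.
Qed.

Lemma cont_sum (R : realType) m (I : eqType) (s : seq I) (F : I -> 'rV[R]_m -> R) :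
  (forall i, continuous (F i)) -> continuous (fun y => \sum_(i <- s) F i y).
Proof.
move=> cF; elim: s => [|a s IH].
  under eq_fun do rewrite big_nil; exact: cst_continuous.
under eq_fun do rewrite big_cons.
by move=> x; apply: continuousD; [exact: cF|exact: IH].
Qed.

Lemma cont_lin (R : realType) m (c e : 'I_m -> R) :
  continuous (fun y : 'rV[R]_m => \sum_i c i * (y 0 i + e i)).
Proof.
apply: cont_sum => i x.
apply: (@continuousM _ _ (fun=> c i) (fun y : 'rV[R]_m => y 0 i + e i)).
  exact: cst_continuous.
apply: continuousD; last exact: cst_continuous.
exact: coord_continuous.
Qed.

Lemma cont_coord (R : realType) m (e : R) i :
  continuous (fun y : 'rV[R]_m => y 0 i + e).
Proof.
move=> x; apply: continuousD; last exact: cst_continuous.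
exact: coord_continuous.
Qed.

Lemma meas_B (R : realType) r m (L : 'M[int]_(r, m)) p (a : 'rV[R]_m) :
  measurable ((box p a `&` kerT L) : set (borelRm R m)).
Proof.
have -> : (box p a `&` kerT L) =
  ([set y | forall i, a 0 i <= y 0 i < a 0 i + p%:R^-1] `&`
   [set y | forall i, 0 <= y 0 i < 1]) `&`
   [set y | forall k : 'I_r, (\sum_(i < m) (L k i)%:~R * y 0 i) \is a Num.int]
   :> set (borelRm R m).
  by apply/seteqP; split => y /=; [move=> [? [? ?]]|move=> [[? ?] ?]].
apply: measurableI; first apply: measurableI.
- apply: meas_forall => i; apply: meas_itv; exact: coord_continuous.
- apply: meas_forall => i; apply: meas_itv; exact: coord_continuous.
- apply: meas_forall => k; apply: meas_int.
  apply: cont_sum => i x.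
  apply: (@continuousM _ _ (fun=> (L k i)%:~R) (fun y : 'rV[R]_m => y 0 i)).
    exact: cst_continuous.
  exact: coord_continuous.
Qed.

Lemma sum_frac (R : realType) r m (L : 'M[int]_(r, m)) (y x : 'rV[R]_m) k :
  ((\sum_(i < m) (L k i)%:~R * (tadd y x) 0 i) \is a Num.int) =
  ((\sum_(i < m) (L k i)%:~R * (y 0 i + x 0 i)) \is a Num.int).
Proof.
have -> : \sum_(i < m) (L k i)%:~R * (tadd y x) 0 i =
  \sum_(i < m) (L k i)%:~R * (y 0 i + x 0 i) -
  \sum_(i < m) (L k i * Num.floor (y 0 i + x 0 i))%:~R.
  rewrite -sumrB; apply: eq_bigr => i _; rewrite mxE /Defs.frac intrM.
  by rewrite mulrBr.
rewrite rpredBr //; apply: rpred_sum => i _; exact: intr_int.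
Qed.

Lemma meas_P (R : realType) r m (L : 'M[int]_(r, m)) p (a x : 'rV[R]_m) :
  (forall i, 0 <= a 0 i /\ a 0 i + p%:R^-1 <= 1) ->
  measurable ([set y | (box p a `&` kerT L) (tadd y x)] : set (borelRm R m)).
Proof.
move=> ha.
have -> : [set y | (box p a `&` kerT L) (tadd y x)] =
  [set y | forall i, a 0 i <= Defs.frac (y 0 i + x 0 i) < a 0 i + p%:R^-1] `&`
   [set y | forall k : 'I_r,
      (\sum_(i < m) (L k i)%:~R * (y 0 i + x 0 i)) \is a Num.int]
   :> set (borelRm R m).
  apply/seteqP; split => y /=.
    move=> [hb [_ hk]]; split; first by move=> i; have := hb i; rewrite mxE.
    by move=> k; rewrite -sum_frac.
  move=> [hb hk]; split; first by move=> i; rewrite mxE.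
  split; last by move=> k; rewrite sum_frac.
  by move=> i; rewrite mxE frac_ge0 frac_lt1.
apply: measurableI.
- apply: meas_forall => i; apply: meas_frac; [exact: cont_coord|exact: (ha i).1|exact: (ha i).2].
- by apply: meas_forall => k; apply: meas_int; exact: cont_lin.
Qed.

Definition pt (R : realType) m p (a : 'I_m -> 'I_p) : 'rV[R]_m :=
  \row_i ((a i)%:R / p%:R).

Definition addI m n (a b : 'I_m -> 'I_n.+1) : {ffun 'I_m -> 'I_n.+1} :=
  [ffun i => inZp (a i + b i)].
Arguments pt R {m p} a.
Arguments addI {m n} a b.

Lemma pt_ge0 (R : realType) m n (a : 'I_m -> 'I_n.+1) i :
  0 <= (pt R a) 0 i /\ (pt R a) 0 i + n.+1%:R^-1 <= 1.
Proof.
rewrite mxE; split; first by rewrite divr_ge0.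
have hp : (0 : R) < n.+1%:R by rewrite ltr0n.
have ha : ((a i)%:R + 1 <= n.+1%:R :> R) by rewrite -natr1 lerD2r ler_nat -ltnS ltn_ord.
have -> : (a i)%:R / n.+1%:R + n.+1%:R^-1 = ((a i)%:R + 1) / n.+1%:R :> R.
  by rewrite mulrDl mul1r.
by rewrite ler_pdivrMr // mul1r.
Qed.

Lemma tadd_pt (R : realType) m n (a b : 'I_m -> 'I_n.+1) :
  tadd (pt R a) (pt R b) = pt R (addI a b).
Proof.
apply/rowP => i; rewrite !mxE ffunE /=.
set s := (a i + b i)%N.
have hp : (0 : R) < n.+1%:R by rewrite ltr0n.
have hs : (a i)%:R / n.+1%:R + (b i)%:R / n.+1%:R =
   (s %/ n.+1)%:R + (s %% n.+1)%:R / n.+1%:R :> R.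
  rewrite -mulrDl -natrD -/s {1}(divn_eq s n.+1) natrD natrM.
  by field; rewrite gt_eqF.
have hr0 : 0 <= (s %% n.+1)%:R / n.+1%:R :> R by rewrite divr_ge0.
have hr1 : (s %% n.+1)%:R / n.+1%:R < 1 :> R.
  by rewrite ltr_pdivrMr // mul1r ltr_nat ltn_pmod.
have hz : ((s %/ n.+1)%:Z)%:~R = (s %/ n.+1)%:R :> R by [].
rewrite hs (@frac_eqz _ (s %/ n.+1)%:Z) hz; first ring.
by apply/andP; split; [rewrite lerDl|rewrite ltrD2l].
Qed.

Lemma int_divP (R : realType) (s : int) n :
  ((s%:~R / n.+1%:R : R) \is a Num.int) = (n.+1%:Z %| s)%Z.
Proof.
have hp : (n.+1%:R : R) != 0 by rewrite pnatr_eq0.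
apply/idP/idP.
  move=> /intrP [z hz]; apply/dvdzP; exists z.
  apply/(@intr_inj R); rewrite intrM.
  by rewrite -hz mulfVK.
move=> /dvdzP [q ->]; rewrite intrM.
by rewrite [(n.+1%:Z)%:~R]/= mulfK // intr_int.
Qed.

Definition Dv r m n (L : 'M[int]_(r, m)) (a : 'I_m -> 'I_n.+1) : Prop :=
  forall k, (n.+1%:Z %| \sum_(i < m) L k i * (a i)%:Z)%Z.
Arguments Dv {r m n} L a.

Lemma kerT_pt (R : realType) r m n (L : 'M[int]_(r, m)) (a : 'I_m -> 'I_n.+1) :
  kerT L (pt R a) <-> Dv L a.
Proof.
have E k : \sum_(i < m) (L k i)%:~R * (pt R a) 0 i =
    (\sum_(i < m) L k i * (a i)%:Z)%:~R / n.+1%:R :> R.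
  rewrite rmorph_sum mulr_suml; apply: eq_bigr => i _.
  by rewrite mxE /= intrM mulrA.
split.
  by move=> [_ h] k; rewrite -(int_divP R) -E.
move=> h; split.
  move=> i; have [h1 h2] := pt_ge0 R a i; apply/andP; split => //.
  apply: (lt_le_trans _ h2); rewrite ltrDl invr_gt0 ltr0n //.
by move=> k; rewrite E int_divP.
Qed.

Lemma kerT_tadd (R : realType) r m (L : 'M[int]_(r, m)) (x y : 'rV[R]_m) :
  kerT L x -> kerT L y -> kerT L (tadd y x).
Proof.
move=> [_ hx] [_ hy]; split.
  by move=> i; rewrite mxE frac_ge0 frac_lt1.
move=> k; rewrite sum_frac.
under eq_bigr do rewrite mulrDr.
by rewrite big_split /= rpredD.
Qed.

Lemma box_shift (R : realType) m n (c d : 'I_m -> 'I_n.+1) (y : 'rV[R]_m) :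
  box n.+1 (pt R c) y -> box n.+1 (pt R (addI c d)) (tadd y (pt R d)).
Proof.
move=> hy i; have := hy i; rewrite !mxE ffunE /=.
set s := (c i + d i)%N.
have hp : (0 : R) < n.+1%:R by rewrite ltr0n.
have hs : (c i)%:R / n.+1%:R + (d i)%:R / n.+1%:R =
   (s %/ n.+1)%:R + (s %% n.+1)%:R / n.+1%:R :> R.
  rewrite -mulrDl -natrD -/s {1}(divn_eq s n.+1) natrD natrM.
  by field; rewrite gt_eqF.
have hr0 : 0 <= (s %% n.+1)%:R / n.+1%:R :> R by rewrite divr_ge0.
have hr1 : (s %% n.+1)%:R / n.+1%:R + n.+1%:R^-1 <= 1 :> R.
  have -> : (s %% n.+1)%:R / n.+1%:R + n.+1%:R^-1 =
     ((s %% n.+1)%:R + 1) / n.+1%:R :> R by rewrite mulrDl mul1r.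
  rewrite ler_pdivrMr // mul1r -natr1 lerD2r ler_nat -ltnS.
  by rewrite ltn_pmod.
have hz : ((s %/ n.+1)%:Z)%:~R = (s %/ n.+1)%:R :> R by [].
move: hs hr0 hr1; clearbody s.
set q := (s %/ n.+1)%:R; set r0 := (s %% n.+1)%:R / n.+1%:R.
set u := n.+1%:R^-1; set ci := _ / _; set di := _ / _.
move=> hs hr0 hr1 /andP [h1 h2].
rewrite (@frac_eqz _ (s %/ n.+1)%:Z) hz -/q; apply/andP; split; lra.
Qed.

Lemma transfer (R : realType) r m n (L : 'M[int]_(r, m))
    (mu : {measure set (borelRm R m) -> \bar R}) (c d : 'I_m -> 'I_n.+1) :
  is_Haar_kerT L mu -> Dv L d ->
  (0 < mu ((box n.+1 (pt R c) `&` kerT L) : set (borelRm R m)))%E ->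
  (0 < mu ((box n.+1 (pt R (addI c d)) `&` kerT L) : set (borelRm R m)))%E.
Proof.
move=> [_ _ hinv] hd hpos.
have kd : kerT L (pt R d) by apply/kerT_pt.
set A := (box n.+1 (pt R (addI c d)) `&` kerT L) : set (borelRm R m).
have mA : measurable A by exact: meas_B.
have mP : measurable ([set y | A (tadd y (pt R d))] : set (borelRm R m)).
  by apply: meas_P => i; exact: pt_ge0.
rewrite -(hinv _ _ kd mA mP).
apply: (lt_le_trans hpos); apply: le_measure; rewrite ?inE //.
  exact: meas_B.
move=> y [hb hk]; split; first exact: box_shift.
exact: kerT_tadd.
Qed.

Lemma pos_nonempty (R : realType) m
    (mu : {measure set (borelRm R m) -> \bar R}) (A : set (borelRm R m)) :
  (0 < mu A)%E -> exists y, A y.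
Proof.
move=> h; apply/not_existsP => hn.
have A0 : A = set0 by apply/seteqP; split => y // /hn.
by move: h; rewrite A0 measure0 ltxx.
Qed.

Definition Mb r m (L : 'M[int]_(r, m)) : nat := \sum_(k < r) \sum_(i < m) `|L k i|%N.

Lemma key_bound (R : realType) r m n (L : 'M[int]_(r, m)) (c : 'I_m -> 'I_n.+1)
   (y : 'rV[R]_m) k :
  box n.+1 (pt R c) y -> kerT L y ->
  exists v : int, (`|v| <= Mb L)%N /\
    (n.+1%:Z %| \sum_(i < m) L k i * (c i)%:Z + v)%Z.
Proof.
move=> hb [_ hk]; have := hk k => /intrP [z hz].
exists (z * n.+1%:Z - \sum_(i < m) L k i * (c i)%:Z); split; last first.
  by apply/dvdzP; exists z; rewrite addrC subrK.
have hp : (0 : R) < n.+1%:R by rewrite ltr0n.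
have hv : ((z * n.+1%:Z - \sum_(i < m) L k i * (c i)%:Z)%:~R : R) =
    \sum_(i < m) (L k i)%:~R * (n.+1%:R * y 0 i - (c i)%:R).
  rewrite intrB intrM rmorph_sum -hz [(n.+1%:Z)%:~R]/= mulr_suml -sumrB.
  apply: eq_bigr => i _; rewrite /= intrM [((c i)%:Z)%:~R]/=; ring.
rewrite -(ler_nat R) natr_absz intr_norm hv.
apply: (le_trans (ler_norm_sum _ _ _)).
apply: (@le_trans _ _ (\sum_(i < m) (`|L k i|%N)%:R)).
  apply: ler_sum => i _; rewrite normrM natr_absz intr_norm.
  apply: ler_piMr => //.
  have := hb i; rewrite mxE => /andP [h1 h2].
  move: h1; rewrite ler_pdivrMr // => h1.
  have h2' : y 0 i < ((c i)%:R + 1) / n.+1%:R.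
    by rewrite mulrDl mul1r.
  move: h2'; rewrite ltr_pdivlMr // => h2'.
  rewrite ger0_norm; lra.
rewrite -natr_sum ler_nat /Mb (bigD1 k) //=; exact: leq_addr.
Qed.

Definition eqc r m n (L : 'M[int]_(r, m)) (a b : 'I_m -> 'I_n.+1) : bool :=
  [forall k, (n.+1%:Z %| \sum_(i < m) L k i * ((b i)%:Z - (a i)%:Z))%Z].
Arguments eqc {r m n} L a b.

Lemma eqc_refl r m n (L : 'M[int]_(r, m)) (a : 'I_m -> 'I_n.+1) : eqc L a a.
Proof.
apply/forallP => k; rewrite big1 ?dvdz0 // => i _; by rewrite subrr mulr0.
Qed.

Lemma eqc_sym r m n (L : 'M[int]_(r, m)) (a b : 'I_m -> 'I_n.+1) :
  eqc L a b -> eqc L b a.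
Proof.
move=> /forallP h; apply/forallP => k.
rewrite (_ : \sum_(i < m) L k i * ((a i)%:Z - (b i)%:Z) =
   - \sum_(i < m) L k i * ((b i)%:Z - (a i)%:Z)); first by rewrite rpredN h.
rewrite -sumrN; apply: eq_bigr => i _; ring.
Qed.

Lemma eqc_trans r m n (L : 'M[int]_(r, m)) (a b c : 'I_m -> 'I_n.+1) :
  eqc L a b -> eqc L b c -> eqc L a c.
Proof.
move=> /forallP h1 /forallP h2; apply/forallP => k.
have := rpredD (h1 k) (h2 k); rewrite -big_split /=.
rewrite (_ : \sum_(i < m) _ = \sum_(i < m) L k i * ((c i)%:Z - (a i)%:Z)) //.
apply: eq_bigr => i _; ring.
Qed.

Lemma addI_eqc r m n (L : 'M[int]_(r, m)) (a d : 'I_m -> 'I_n.+1) :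
  eqc L a (addI a d) <-> Dv L d.
Proof.
have E k : \sum_(i < m) L k i * (((addI a d) i)%:Z - (a i)%:Z) =
  \sum_(i < m) L k i * (d i)%:Z -
  n.+1%:Z * \sum_(i < m) L k i * ((a i + d i) %/ n.+1)%N%:Z.
  rewrite mulr_sumr -sumrB; apply: eq_bigr => i _; rewrite ffunE /=.
  have h : ((a i + d i)%N%:Z) =
    ((a i + d i) %/ n.+1)%N%:Z * n.+1%:Z + ((a i + d i) %% n.+1)%N%:Z.
    by rewrite -PoszM -PoszD -divn_eq.
  move: h; rewrite PoszD => h.
  have -> : (((a i + d i) %% n.+1)%N%:Z) =
    (a i)%:Z + (d i)%:Z - ((a i + d i) %/ n.+1)%N%:Z * n.+1%:Z.
    by rewrite h; ring.
  ring.
have hm k : (n.+1%:Z %| n.+1%:Z * \sum_(i < m) L k i * ((a i + d i) %/ n.+1)%N%:Z)%Z.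
  by apply/dvdzP; eexists; rewrite mulrC.
split.
  move=> /forallP h k; have := h k; by rewrite E rpredBr.
move=> h; apply/forallP => k; by rewrite E rpredBr.
Qed.

Lemma sub_exists m n (a b : 'I_m -> 'I_n.+1) :
  exists d : {ffun 'I_m -> 'I_n.+1}, [ffun i => b i] = addI a d.
Proof.
exists [ffun i => inZp (b i + (n.+1 - a i))]; apply/ffunP => i.
rewrite !ffunE; apply: val_inj => /=.
rewrite modnDmr addnCA subnKC; last exact: ltnW.
by rewrite addnC modnDl modn_small.
Qed.

Lemma pt_ffun (R : realType) m n (j : 'I_m -> 'I_n.+1) :
  pt R [ffun i => j i] = pt R j.
Proof. by apply/rowP => i; rewrite !mxE ffunE. Qed.

Lemma pt_inj (R : realType) m n (a b : {ffun 'I_m -> 'I_n.+1}) :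
  pt R a = pt R b -> a = b.
Proof.
move=> e; apply/ffunP => i; have := congr1 (fun x : 'rV[R]_m => x 0 i) e.
rewrite /= !mxE => /(congr1 (fun x => x * n.+1%:R)).
rewrite !mulfVK ?pnatr_eq0 // => /eqP; rewrite eqr_nat => /eqP h.
exact: val_inj.
Qed.

Lemma coset_char (R : realType) r m n (L : 'M[int]_(r, m))
   (c : {ffun 'I_m -> 'I_n.+1}) (z : 'rV[R]_m) :
  (tadd (pt R c) @` (@Lambda R m n.+1 `&` kerT L)) z <->
  exists b : {ffun 'I_m -> 'I_n.+1}, z = pt R b /\ eqc L c b.
Proof.
split.
  move=> [y [[j ->] hk] <-].
  have hk' : kerT L (pt R [ffun i => j i]) by rewrite pt_ffun.
  move/kerT_pt: hk' => hd.
  exists (addI c [ffun i => j i]); split.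
    by rewrite -tadd_pt pt_ffun.
  exact/addI_eqc.
move=> [b [-> hb]].
have [d hd] := sub_exists c b.
have eb : b = addI c d by rewrite -hd; apply/ffunP => i; rewrite ffunE.
rewrite eb in hb; move/addI_eqc: hb => hdv.
exists (pt R d); last by rewrite tadd_pt eb.
split; first by exists d.
exact/kerT_pt.
Qed.

Lemma main_n (R : realType) r m (L : 'M[int]_(r, m))
    (mu : {measure set (borelRm R m) -> \bar R}) n :
  is_Haar_kerT L mu ->
  exists js : seq 'rV[R]_m,
    [/\ (size js <= (Mb L).*2.+1 ^ r)%N,
        (forall j, j \in js -> Jset L mu n.+1 j),
        Jset L mu n.+1 = \bigcup_(k in [set: 'I_(size js)])
                        (tadd (nth 0 js k) @` (@Lambda R m n.+1 `&` kerT L)) &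
        trivIset [set: 'I_(size js)]
          (fun k => tadd (nth 0 js k) @` (@Lambda R m n.+1 `&` kerT L))].
Proof.
move=> hH.
pose idx := {ffun 'I_m -> 'I_n.+1}.
pose inJ (a : idx) : bool := `[< Jset L mu n.+1 (pt R a) >].
pose canon (a : idx) : idx := odflt a [pick b | inJ b && eqc L a b].
pose reps := undup [seq canon a | a <- [seq a <- enum idx | inJ a]].
have hcan (a : idx) : inJ a -> inJ (canon a) /\ eqc L a (canon a).
  move=> ha; rewrite /canon; case: pickP => [b /andP[hb1 hb2]|h] //=.
  by have := h a; rewrite ha eqc_refl.
have hcanE (a b : idx) : inJ a -> eqc L a b -> canon a = canon b.
  move=> ia hab.
  have E : [pick x | inJ x && eqc L a x] = [pick x | inJ x && eqc L b x].
    apply: eq_pick => x /=; congr andb; apply/idP/idP => h.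
      exact: eqc_trans (eqc_sym hab) h.
    exact: eqc_trans hab h.
  rewrite /canon E; case: pickP => //= h.
  by have := h a; rewrite ia (eqc_sym hab).
have hreps (a : idx) : a \in reps -> inJ a /\ canon a = a.
  rewrite mem_undup => /mapP [c]; rewrite mem_filter => /andP [hc _] ->.
  have [h1 h2] := hcan c hc; split => //.
  by rewrite -(hcanE _ _ hc h2).
have ureps : uniq reps by exact: undup_uniq.
have hpos (a : idx) : inJ a ->
    (0 < mu ((box n.+1 (pt R a) `&` kerT L) : set (borelRm R m)))%E.
  by move=> /asboolP [].
pose a0 : idx := [ffun => ord0].
pose ptf := fun a : idx => pt R a.
exists (map ptf reps); split.
- pose M := Mb L.
  pose W := {ffun 'I_r -> 'I_M.*2.+1}.
  pose keyP (a : idx) (w : W) : bool := [forall k,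
    (n.+1%:Z %| \sum_(i < m) L k i * (a i)%:Z + ((w k)%:Z - M%:Z))%Z].
  pose key (a : idx) : W := odflt [ffun => ord0] [pick w | keyP a w].
  have hkey (a : idx) : inJ a -> keyP a (key a).
    move=> ia; suff [w hw] : exists w, keyP a w.
      by rewrite /key; case: pickP => //= h; have := h w; rewrite hw.
    have [y [hb hk]] := pos_nonempty (hpos a ia).
    have : forall k, exists wk : 'I_M.*2.+1,
        (n.+1%:Z %| \sum_(i < m) L k i * (a i)%:Z + (wk%:Z - M%:Z))%Z.
      move=> k; have [v [hv hd]] := key_bound k hb hk.
      have hv' : (`|v| <= M%:Z)%R by rewrite -abszE lez_nat.
      have hv0 : (0 <= v + M%:Z)%R.
        have := ler_norm (- v); rewrite normrN => h1.
        rewrite -(opprK v) addrC subr_ge0; exact: le_trans h1 hv'.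
      have hvM : (v <= M%:Z)%R by exact: le_trans (ler_norm v) hv'.
      have habs : ((absz (v + M%:Z))%:Z = v + M%:Z)%R by rewrite gez0_abs.
      have hlt : (absz (v + M%:Z)%R < M.*2.+1)%N.
        by rewrite ltnS -lez_nat habs -addnn PoszD lerD2r.
      exists (Ordinal hlt) => /=.
      by rewrite habs addrK.
    move=> /fin_all_exists [f hf]; exists [ffun k => f k].
    by apply/forallP => k; rewrite ffunE; exact: hf.
  have inj : {in reps &, injective key}.
    move=> a b ha hb e; have [ia ca] := hreps a ha; have [ib cb] := hreps b hb.
    have ka := hkey a ia; have kb := hkey b ib; rewrite e in ka.
    have hab : eqc L a b.
      apply/forallP => k; have := rpredB (forallP kb k) (forallP ka k).
      rewrite opprD addrACA subrr addr0 -sumrB.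
      rewrite (_ : \sum_(i < m) _ = \sum_(i < m) L k i * ((b i)%:Z - (a i)%:Z)) //.
      apply: eq_bigr => i _; ring.
    by rewrite -ca -cb; exact: hcanE.
  have U : uniq (map key reps) by rewrite map_inj_in_uniq.
  rewrite size_map -(size_map key); move/card_uniqP: U => <-.
  apply: leq_trans (max_card _) _; by rewrite card_ffun !card_ord.
- move=> j /mapP [a ha ->]; have [h _] := hreps a ha; exact/asboolP.
- apply/seteqP; split => x.
    move=> hx; have hx' := hx; move: hx' => [[j hj] _].
    pose a : idx := [ffun i => j i].
    have xa : x = pt R a by rewrite pt_ffun.
    have ia : inJ a by apply/asboolP; rewrite -xa.
    have ca : canon a \in reps.
      rewrite mem_undup; apply: map_f; by rewrite mem_filter ia mem_enum.
    have kl : (index (canon a) reps < size (map ptf reps))%N.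
      by rewrite size_map index_mem.
    exists (Ordinal kl) => //=.
    rewrite (nth_map a0); last by rewrite index_mem.
    rewrite nth_index //; apply/coset_char; exists a; split => //.
    exact: eqc_sym (hcan a ia).2.
  move=> [k _ hx].
  have kl : (k < size reps)%N by rewrite -(size_map ptf).
  move: hx; rewrite (nth_map a0) //; set c := nth a0 reps k.
  have hc : c \in reps by exact: mem_nth.
  have [ic _] := hreps c hc.
  move=> /coset_char [b [-> hb]].
  have [d hd] := sub_exists c b.
  have eb : b = addI c d by rewrite -hd; apply/ffunP => i; rewrite ffunE.
  rewrite eb in hb; move/addI_eqc: hb => hdv.
  split; first by exists b.
  rewrite eb; exact: transfer hH hdv (hpos c ic).
- move=> k l _ _ [z [hzk hzl]].
  have kl : (k < size reps)%N by rewrite -(size_map ptf).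
  have ll : (l < size reps)%N by rewrite -(size_map ptf).
  move: hzk hzl; rewrite !(nth_map a0) //.
  move=> /coset_char [b1 [e1 h1]] /coset_char [b2 [e2 h2]].
  have eb : b1 = b2 by apply: (pt_inj (R:=R)); rewrite -e1 -e2.
  rewrite -eb in h2.
  have hcl : eqc L (nth a0 reps k) (nth a0 reps l) by exact: eqc_trans h1 (eqc_sym h2).
  have := hcanE _ _ (hreps _ (mem_nth a0 kl)).1 hcl.
  rewrite (hreps _ (mem_nth a0 kl)).2 (hreps _ (mem_nth a0 ll)).2.
  move/eqP; rewrite nth_uniq // => /eqP; exact: val_inj.
Qed.

Unset Implicit Arguments.

Theorem lemma2p4 (R : realType) (r m : nat) (L : 'M[int]_(r, m)) :
  exists KL : nat, (0 < KL)%N /\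
  forall mu : {measure set (borelRm R m) -> \bar R}, is_Haar_kerT L mu ->
  forall p : nat, (0 < p)%N ->
  exists js : seq 'rV[R]_m,
    [/\ (size js <= KL)%N,
        (forall j, j \in js -> Jset L mu p j),
        Jset L mu p = \bigcup_(k in [set: 'I_(size js)])
                        (tadd (nth 0 js k) @` (@Lambda R m p `&` kerT L)) &
        trivIset [set: 'I_(size js)]
          (fun k => tadd (nth 0 js k) @` (@Lambda R m p `&` kerT L))].
Proof.
exists ((Mb L).*2.+1 ^ r)%N; split; first by rewrite expn_gt0.
move=> mu hH [|n] // _; exact: main_n.
Qed.
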